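(* Let $\mathbf{A}$ be a structure such that there exists a retraction $r:\mathbf{A}\twoheadrightarrow\mathbf{A}^2$. Then $\operatorname{rank}(\operatorname{Pol}\mathbf{A}:\operatorname{End}\mathbf{A})=1$. More precisely, if $\epsilon:\mathbf{A}^2\hookrightarrow\mathbf{A}$ is a homomorphism with $r\circ\epsilon=1_{\mathbf{A}^2}$, then $\operatorname{Pol}\mathbf{A}$ is generated as a clone by $\operatorname{End}\mathbf{A}\cup\{\epsilon\}$, while $\operatorname{End}\mathbf{A}$ alone does not generate $\operatorname{Pol}\mathbf{A}$.
   Context: For a set $A$, $O_A^{(n)}$ is the set of functions $A^n\to A$, $O_A=\bigcup_{n\ge1}O_A^{(n)}$, projections are $e_i^n(x_1,\dots,x_n)=x_i$, and for $f\in O_A^{(n)}$, $g_1,\dots,g_n\in O_A^{(m)}$, $f\circ\langle g_1,\dots,g_n\rangle(\bar x)=f(g_1(\bar x),\dots,g_n(\bar x))$. A clone on $A$ is a subset of $O_A$ containing all projections and closed under this composition; $\langle M\rangle_{O_A}$ is the clone generated by $M\subseteq O_A$. For a structure $\mathbf{A}$, $\operatorname{Pol}\mathbf{A}$ is the clone of all homomorphisms $\mathbf{A}^n\to\mathbf{A}$ ($n\ge1$, $\mathbf{A}^n$ the direct power), and $\operatorname{End}\mathbf{A}$ is its unary part (the endomorphisms). For a clone $F$ and $M\subseteq F$, the relative rank $\operatorname{rank}(F:M)$ is the least cardinality of a set $N\subseteq F$ with $\langle M\cup N\rangle_{O_A}=F$. A homomorphism $r:\mathbf{A}\to\mathbf{B}$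 is a retraction if some homomorphism $\iota:\mathbf{B}\to\mathbf{A}$ (a section) satisfies $r\circ\iota=1_{\mathbf{B}}$. *)

(* Defs.v *)
From mathcomp Require Import all_boot.
Set Implicit Arguments. Unset Strict Implicit. Unset Printing Implicit Defensive.

Record signature := Signature { sym : Type; arity : sym -> nat }.

Record structure (S : signature) := Structure {
  carrier :> Type;
  rel : forall s : sym S, ('I_(arity s) -> carrier) -> Prop }.

Definition pow (S : signature) (A : structure S) (n : nat) : structure S :=
  @Structure S ('I_n -> A)
    (fun s t => forall j : 'I_n, @rel S A s (fun k => t k j)).

Definition hom (S : signature) (A B : structure S) (f : A -> B) : Prop :=
  forall (s : sym S) (t : 'I_(arity s) -> A), @rel S A s t -> @rel S B s (fun k => f (t k)).

Definition retraction (S : signature) (A B : structure S) (r : A -> B) : Prop :=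
  hom r /\ exists iota : B -> A, hom iota /\ forall b, r (iota b) = b.

(* Sets of operations on a type X: an n-ary operation is a map ('I_n -> X) -> X.
   Only arities n >= 1 are relevant (O_X = U_{n>=1} O_X^(n)). *)
Definition opset (X : Type) := forall n : nat, (('I_n -> X) -> X) -> Prop.

Definition opset_eq X (F G : opset X) : Prop :=
  forall n, 0 < n -> forall f, F n f <-> G n f.

Definition opset_sub X (F G : opset X) : Prop :=
  forall n, 0 < n -> forall f, F n f -> G n f.

Definition opset_union X (F G : opset X) : opset X := fun n f => F n f \/ G n f.

Definition op (X : Type) := {n : nat & ('I_n -> X) -> X}.

Definition opset_range X m (N : 'I_m -> op X) : opset X :=
  fun n f => exists j, N j = existT _ n f.

Definition proj X n (i : 'I_n) : ('I_n -> X) -> X := fun x => x i.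

Definition is_clone X (C : opset X) : Prop :=
  (forall n (i : 'I_n), C n (proj i)) /\
  (forall n m (f : ('I_n -> X) -> X) (g : 'I_n -> ('I_m -> X) -> X),
      0 < n -> 0 < m -> C n f -> (forall i, C m (g i)) ->
      C m (fun x => f (fun i => g i x))).

Definition gen X (M : opset X) : opset X :=
  fun n f => forall C, is_clone C -> opset_sub M C -> C n f.

Definition Pol (S : signature) (A : structure S) : opset A :=
  fun n f => @hom S (pow A n) A f.

Definition End (S : signature) (A : structure S) : opset A :=
  fun n f => n = 1 /\ @Pol S A n f.

Definition rel_gen_of_size X (F M : opset X) (m : nat) : Prop :=
  exists N : 'I_m -> op X,
    injective N /\ (forall j, F (projT1 (N j)) (projT2 (N j))) /\
    opset_eq (gen (opset_union M (opset_range N))) F.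

Definition rel_rank_eq X (F M : opset X) (k : nat) : Prop :=
  rel_gen_of_size F M k /\ forall m, m < k -> ~ rel_gen_of_size F M m.
Arguments Pol {S} A n f.
Arguments End {S} A n f.

(* Main.v *)
Require Import Defs.
From mathcomp Require Import all_boot.
From Stdlib Require FunctionalExtensionality.
Notation functional_extensionality := FunctionalExtensionality.functional_extensionality.
Set Implicit Arguments. Unset Strict Implicit.

Lemma Pol_clone S (A : structure S) : is_clone (Pol A).
Proof.
split.
- move=> n i s t Ht /=. exact: Ht i.
- move=> n m f g _ _ Hf Hg s t Ht. apply: (Hf s (fun k i => g i (t k))).
  move=> i. exact: Hg i s t Ht.
Qed.

Definition ess X : opset X :=
  fun n f => exists i : 'I_n, exists g : X -> X, forall x, f x = g (x i).

Lemma ess_clone X : is_clone (@ess X).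
Proof.
split.
- move=> n i; exists i, id => x //.
- move=> n m f g _ _ [i [h Hh]] Hg. case: (Hg i) => j [h' Hh'].
  exists j, (fun a => h (h' a)) => x. by rewrite Hh Hh'.
Qed.

Lemma End_ess S (A : structure S) : opset_sub (End A) (@ess A).
Proof.
move=> n _ f [En _]; subst n. exists ord0, (fun a => f (fun _ => a)) => x.
congr f. apply: functional_extensionality => i. by rewrite (ord1 i).
Qed.

Lemma not_ess S (A : structure S) (eps : pow A 2 -> A) (r : A -> pow A 2) :
  (exists a b : A, a <> b) -> (forall x, r (eps x) = x) -> ~ @ess _ 2 eps.
Proof.
move=> [a [b ab]] Hre [i [g Hg]].
case: i Hg => [[|[|m]] Hm] // Hg.
- pose x := fun _ : 'I_2 => a.
  pose y := fun k : 'I_2 => if val k == 0 then a else b.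
  have : eps x = eps y by rewrite !Hg.
  move=> /(congr1 r); rewrite !Hre => /(congr1 (fun z => z ord_max)).
  by rewrite /x /y /=.
- pose x := fun _ : 'I_2 => a.
  pose y := fun k : 'I_2 => if val k == 0 then b else a.
  have : eps x = eps y by rewrite !Hg.
  move=> /(congr1 r); rewrite !Hre => /(congr1 (fun z => z ord0)).
  by rewrite /x /y /=.
Qed.

Lemma gen_not S (A : structure S) (M : opset A) eps (r : A -> pow A 2) :
  (exists a b : A, a <> b) -> Pol A 2 eps -> (forall x, r (eps x) = x) ->
  opset_sub M (@ess A) -> ~ opset_eq (gen M) (Pol A).
Proof.
move=> ab Pe Hre HM Heq.
have G : @gen _ M 2 eps by exact: ((Heq 2 isT eps).2 Pe).
have := G _ (@ess_clone A) HM. exact: (not_ess ab Hre).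
Qed.

Lemma Pol_in S (A : structure S) (r : A -> pow A 2) (eps : pow A 2 -> A)
  (C : opset A) : hom r -> (forall x, r (eps x) = x) -> is_clone C ->
  (forall f, End A 1 f -> C 1 f) -> C 2 eps ->
  forall n f, Pol A n.+1 f -> C n.+1 f.
Proof.
move=> hr Hre [Cp Cc] CE Ce. elim=> [|n IH] f Hf; first by apply: CE.
pose f' := fun y : 'I_n.+1 -> A => f (fun i : 'I_n.+2 =>
   if val i == 0 then (r (y ord0) : 'I_2 -> A) ord0
   else if val i == 1 then (r (y ord0) : 'I_2 -> A) ord_max
   else y (inord i.-1)).
have Hf' : Pol A n.+1 f'.
  move=> s t Ht. apply: Hf => i /=.
  case E0: (val i == 0) => /=.
    exact: (hr s (fun k => t k ord0) (Ht ord0) ord0).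
  case E1: (val i == 1) => /=.
    exact: (hr s (fun k => t k ord0) (Ht ord0) ord_max).
  exact: Ht.
have IHf := IH f' Hf'.
pose g := fun j : 'I_n.+1 =>
  if val j == 0 then (fun x : 'I_n.+2 -> A => eps (fun k : 'I_2 => x (inord k)))
  else proj (inord j.+1 : 'I_n.+2).
have -> : f = fun x => f' (fun j => g j x).
  apply: functional_extensionality => x. rewrite /f' /g. congr f.
  apply: functional_extensionality => i /=.
  case: i => [[|[|m]] Hm] /=.
  - rewrite Hre /=. congr x. apply: val_inj. by rewrite /= inordK.
  - rewrite Hre /=. congr x. apply: val_inj. by rewrite /= inordK.
  - rewrite (@inordK n m.+1) //= /proj. congr x. apply: val_inj. by rewrite /= inordK.
apply: (Cc n.+1 n.+2 f' g) => // j.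
rewrite /g; case: (val j == 0).
- exact: (Cc 2 n.+2 eps (fun k : 'I_2 => proj (inord k)) isT isT Ce (fun k => Cp _ _)).
- exact: Cp.
Qed.

Lemma gen_eq S (A : structure S) (r : A -> pow A 2) (eps : pow A 2 -> A) :
  hom r -> hom eps -> (forall x, r (eps x) = x) ->
  opset_eq (gen (opset_union (End A) (opset_range (fun _ : 'I_1 => existT _ 2 eps))))
           (Pol A).
Proof.
move=> hr he Hre n n0 f; split.
- move=> G. apply: G; first exact: Pol_clone.
  move=> k _ g [[_ Hg]|[j Hj]]; first exact Hg.
  move: Hj => /= Hj.
  have : Pol A (projT1 (existT (fun n => ('I_n -> A) -> A) 2 eps))
               (projT2 (existT (fun n => ('I_n -> A) -> A) 2 eps)) by exact he.
  by rewrite Hj.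
- move=> Hf C HC HM. case: n n0 f Hf => // n _ f Hf.
  apply: (Pol_in hr Hre HC _ _ Hf).
  + move=> h H. exact: (HM 1 isT h (or_introl H)).
  + exact: (HM 2 isT eps (or_intror (ex_intro _ ord0 erefl))).
Qed.

Theorem proposition5p2 (S : signature) (A : structure S)
    (Hnontriv : exists a b : A, a <> b)
    (r : A -> pow A 2) (Hr : retraction r) :
  rel_rank_eq (Pol A) (End A) 1 /\
  forall eps : pow A 2 -> A,
    hom eps -> (forall x, r (eps x) = x) ->
    opset_eq (gen (opset_union (End A) (opset_range (fun _ : 'I_1 => existT _ 2 eps))))
             (Pol A) /\
    ~ opset_eq (gen (End A)) (Pol A).
Proof.
case: Hr => hr [iota [hi Hri]].
split.
- split.
  + exists (fun _ => existT _ 2 iota). split.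
      move=> x y _; by rewrite (ord1 x) (ord1 y).
    split; first by move=> j; exact: hi.
    exact: gen_eq hr hi Hri.
  + case=> [|m] // _ [N [_ [_ Heq]]].
    apply: (gen_not Hnontriv hi Hri _ Heq).
    move=> k k0 f [E|[j _]]; first exact: (End_ess k0 E).
    by case: j.
- move=> eps he Hre. split; first exact: gen_eq hr he Hre.
  apply: (gen_not Hnontriv he Hre). exact: End_ess.
Qed.
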